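(* Place the almost positive roots of type $C_n$ in the off-diagonal entries of an $(n+1)\times(n+1)$ array via: entry $(1,j)$ ($2\le j\le n+1$) is $-\alpha_{j-1}$; entry $(i,j)$ with $2\le i<j$ is $\varepsilon_{i-1}-\varepsilon_{j-1}$; entry $(i,j)$ with $i>j$ is $\varepsilon_j+\varepsilon_{i-1}$. Let $i,j,k,l\in[1,n+1]$ be pairwise distinct with $i<k$ and $j<l$. Then the $(i,j)$-entry is $\underline c$-compatible with the $(k,l)$-entry if and only if the $(i,l)$-entry is not $\underline c$-compatible with the $(k,j)$-entry.
   Context: Type $C_n$: standard basis $\varepsilon_i$ of $\mathbb{R}^n$, simple roots $\alpha_i=\varepsilon_i-\varepsilon_{i+1}$ ($i<n$), $\alpha_n=2\varepsilon_n$, $\Pi$ the simple roots, $\Phi_+=\{\varepsilon_i\pm\varepsilon_j:i<j\}\cup\{2\varepsilon_i\}$, $\Phi_{\ge-1}=\Phi_+\sqcup(-\Pi)$. With simple reflections $s_i$ and $c=s_1\cdots s_n$, $\tau:\Phi_{\ge-1}\to\Phi_{\ge-1}$ is $\tau(-\alpha_i)=s_1\cdots s_{i-1}(\alpha_i)$, $\tau(s_n\cdots s_{i+1}(\alpha_i))=-\alpha_i$, $\tau(\alpha)=c(\alpha)$ otherwise. The $\underline c$-compatibility degree is the unique $\tau$-invariant function $\Phi_{\ge-1}^2\to\mathbb{Z}$ with $(-\alpha\|_{\underline c}-\alpha')=0$ for $\alpha,\alpha'\in\Pi$ and $(-\alpha\|_{\underline c}\beta)=[\beta:\alpha]$ (coefficient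 of $\alpha$ in $\beta$) for $\alpha\in\Pi,\beta\in\Phi_+$; two roots are $\underline c$-compatible if their degree is $0$. *)

(* Defs.v *)
(* Type C_n root system realised in Z^n = 'rV[int]_n,
   with 1-based indices as in the paper. *)
From mathcomp Require Import all_boot all_order all_algebra.
Set Implicit Arguments. Unset Strict Implicit. Unset Printing Implicit Defensive.
Import Order.TTheory GRing.Theory Num.Theory.
Local Open Scope ring_scope.

Section TypeC.
Variable n : nat.
Notation V := 'rV[int]_n.

Definition eps (i : nat) : V := \row_(k < n) ((k.+1 == i)%N)%:R.

Definition alpha (i : nat) : V :=
  if (i < n)%N then eps i - eps i.+1 else 2%:R *: eps n.

Definition dot (u v : V) : int := \sum_(k < n) u 0 k * v 0 k.

Definition refl (a v : V) : V := v - ((2 * dot v a) %/ dot a a)%Z *: a.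

Definition s (i : nat) (v : V) : V := refl (alpha i) v.

Definition word_act (w : seq nat) (v : V) : V := foldr s v w.

Definition cox (v : V) : V := word_act (iota 1 n) v.

Definition tau_lo (i : nat) : V := word_act (iota 1 i.-1) (alpha i).
Definition tau_hi (i : nat) : V := word_act (rev (iota i.+1 (n - i))) (alpha i).

Definition tau (v : V) : V :=
  if [seq i <- iota 1 n | v == - alpha i] is i :: _ then tau_lo i
  else if [seq i <- iota 1 n | v == tau_hi i] is i :: _ then - alpha i
  else cox v.

Definition pos_root (b : V) : Prop :=
  (exists i j, [/\ (1 <= i)%N, (i < j)%N, (j <= n)%N &
                 (b = eps i - eps j \/ b = eps i + eps j)]) \/
  (exists i, [/\ (1 <= i)%N, (i <= n)%N & b = 2%:R *: eps i]).

Definition neg_simple (b : V) : Prop :=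
  exists i, [/\ (1 <= i)%N, (i <= n)%N & b = - alpha i].

Definition almost_pos (b : V) : Prop := pos_root b \/ neg_simple b.

(* f is the c-compatibility degree: tau-invariant on Phi_{>=-1}^2,
   (-a || -a') = 0 for simple a, a', and (-alpha_i || beta) = [beta : alpha_i]
   (the coefficient of alpha_i in the expansion of beta in simple roots). *)
Definition is_compat_degree (f : V -> V -> int) : Prop :=
  [/\ (forall a b, almost_pos a -> almost_pos b -> f (tau a) (tau b) = f a b),
      (forall i j, (1 <= i <= n)%N -> (1 <= j <= n)%N ->
          f (- alpha i) (- alpha j) = 0) &
      (forall i (b : V) (c : nat -> int), (1 <= i <= n)%N -> pos_root b ->
          b = \sum_(1 <= k < n.+1) c k *: alpha k ->
          f (- alpha i) b = c i)].

Definition compatible (f : V -> V -> int) (a b : V) : Prop := f a b = 0.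

Definition entry (i j : nat) : V :=
  if i == 1%N then - alpha j.-1
  else if (i < j)%N then eps i.-1 - eps j.-1
  else eps j + eps i.-1.

End TypeC.

(* Main.v *)
Require Import Defs.
From mathcomp Require Import all_boot all_order all_algebra zify ring.
Set Implicit Arguments. Unset Strict Implicit. Unset Printing Implicit Defensive.
Import Order.TTheory GRing.Theory Num.Theory.
Open Scope ring_scope.

Ltac ifs := repeat match goal with
  | |- context[if ?b then _ else _] =>
     lazymatch b with context[if _ then _ else _] => fail | _ => let E := fresh "E" in case E: b end
  end; try lia.

Ltac dec_ifs := do 8 try match goal with
  | |- context[if ?b then _ else _] =>
     lazymatch b with context[if _ then _ else _] => fail | true => fail | false => fail | _ =>
       first [rewrite (_ : b = true); last lia | rewrite (_ : b = false); last lia] end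
  end.

Section Aux.
Variable n : nat.
Notation V := 'rV[int]_n.
Notation eps := (eps n).
Notation alpha := (alpha n).

Definition lin (w : nat -> int) (v : V) : int := \sum_(k < n) w k.+1 * v 0 k.

Lemma linD w (u v : V) : lin w (u + v) = lin w u + lin w v.
Proof. by rewrite /lin -big_split; apply: eq_bigr => k _; rewrite mxE mulrDr. Qed.
Lemma linN w (v : V) : lin w (- v) = - lin w v.
Proof. by rewrite /lin -sumrN; apply: eq_bigr => k _; rewrite mxE mulrN. Qed.
Lemma linB w (u v : V) : lin w (u - v) = lin w u - lin w v.
Proof. by rewrite linD linN. Qed.
Lemma linZ w c (v : V) : lin w (c *: v) = c * lin w v.
Proof. by rewrite /lin mulr_sumr; apply: eq_bigr => k _; rewrite mxE mulrCA. Qed.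
Lemma lin_eps w a : (1 <= a <= n)%N -> lin w (eps a) = w a.
Proof.
move=> /andP[a1 an]; have Ha : (a.-1 < n)%N by lia.
rewrite /lin (bigD1 (Ordinal Ha)) //= big1 => [|k Hk]; rewrite mxE.
  by rewrite prednK // eqxx mulr1 addr0.
case: eqP; last by rewrite mulr0.
move=> E; move: Hk; have -> : k = Ordinal Ha by apply: val_inj => /=; lia.
by rewrite eqxx.
Qed.

Lemma dot_eps (v : V) a : dot v (eps a) = lin (fun k => (k == a)%:R) v.
Proof. by apply: eq_bigr => k _; rewrite mxE mulrC. Qed.
Lemma dotD (v x y : V) : dot v (x + y) = dot v x + dot v y.
Proof. by rewrite /dot -big_split; apply: eq_bigr => k _; rewrite mxE mulrDr. Qed.
Lemma dotN (v x : V) : dot v (- x) = - dot v x.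
Proof. by rewrite /dot -sumrN; apply: eq_bigr => k _; rewrite mxE mulrN. Qed.
Lemma dotZ (v : V) c x : dot v (c *: x) = c * dot v x.
Proof. by rewrite /dot mulr_sumr; apply: eq_bigr => k _; rewrite mxE mulrCA. Qed.

Lemma dotB (v x y : V) : dot v (x - y) = dot v x - dot v y.
Proof. by rewrite dotD dotN. Qed.

Definition coord a (v : V) := lin (fun k => (k == a)%:R) v.

Lemma coord_eps a b : (1 <= b <= n)%N -> coord a (eps b) = (b == a)%:R.
Proof. by move=> H; rewrite /coord lin_eps. Qed.

Definition L i (v : V) := if (i < n)%N then coord i v - coord i.+1 v else coord n v.

Lemma s_form i (v : V) : (1 <= i <= n)%N -> s i v = v - L i v *: alpha i.
Proof.
move=> /andP[i1 iN]; rewrite /s /refl /L /alpha.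
case: ifP => Hi.
  have Daa : dot (eps i - eps i.+1) (eps i - eps i.+1) = 2.
    rewrite dotB !dot_eps !linB !lin_eps; try lia.
  by rewrite Daa dotB !dot_eps mulKz.
have Daa : dot (2%:R *: eps n) (2%:R *: eps n) = 4.
  by rewrite dotZ dot_eps linZ lin_eps ?eqxx //; lia.
rewrite Daa dotZ dot_eps -/(coord n v).
have -> : (2 * (2%:R * coord n v) : int) = 4 * coord n v by ring.
by rewrite mulKz.
Qed.

Lemma coord_eps' a b : (1 <= b <= n)%N -> coord a (eps b) = (b == a)%:R.
Proof. exact: coord_eps. Qed.

Lemma s_eps_lt i k : (1 <= i)%N -> (i < n)%N -> (1 <= k <= n)%N ->
  s i (eps k) = eps (if k == i then i.+1 else if k == i.+1 then i else k).
Proof.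
move=> i1 iN Hk; rewrite s_form; last lia.
rewrite /L iN /alpha iN !coord_eps //.
case: (eqVneq k i) => [->|ki].
  rewrite (introF eqP (_ : i <> i.+1)) /=; last lia.
  by rewrite subr0 scale1r opprB addrC subrK.
case: (eqVneq k i.+1) => [->|ki1] /=.
  by rewrite sub0r scaleN1r opprK addrC subrK.
by rewrite subrr scale0r subr0.
Qed.

Lemma s_eps_n k : (1 <= n)%N -> (1 <= k <= n)%N ->
  s n (eps k) = if k == n then - eps n else eps k.
Proof.
move=> n1 Hk; rewrite s_form; last lia.
rewrite /L ltnn /alpha ltnn !coord_eps //.
case: (eqVneq k n) => [->|kn] /=.
  by rewrite scale1r scaler_nat mulr2n opprD addrA subrr sub0r.
by rewrite scale0r subr0.
Qed.

Lemma LD i (u v : V) : L i (u + v) = L i u + L i v.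
Proof. rewrite /L; case: ifP => _; rewrite /coord !linD //; ring. Qed.
Lemma LN i (v : V) : L i (- v) = - L i v.
Proof. rewrite /L; case: ifP => _; rewrite /coord !linN //; ring. Qed.
Lemma LZ i c (v : V) : L i (c *: v) = c * L i v.
Proof. rewrite /L; case: ifP => _; rewrite /coord !linZ //; ring. Qed.

Lemma sD i (u v : V) : (1 <= i <= n)%N -> s i (u + v) = s i u + s i v.
Proof. by move=> H; rewrite !s_form // LD scalerDl opprD addrACA. Qed.
Lemma sN i (v : V) : (1 <= i <= n)%N -> s i (- v) = - s i v.
Proof. by move=> H; rewrite !s_form // LN scaleNr opprK opprB addrC. Qed.
Lemma sZ i c (v : V) : (1 <= i <= n)%N -> s i (c *: v) = c *: s i v.
Proof. by move=> H; rewrite !s_form // LZ scalerBr scalerA. Qed.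

Definition inr (w : seq nat) := all (fun i => 1 <= i <= n)%N w.

Lemma wD w (u v : V) : inr w -> word_act w (u + v) = word_act w u + word_act w v.
Proof. by elim: w => //= i w IH /andP[Hi Hw]; rewrite IH // sD. Qed.
Lemma wN w (v : V) : inr w -> word_act w (- v) = - word_act w v.
Proof. by elim: w => //= i w IH /andP[Hi Hw]; rewrite IH // sN. Qed.
Lemma wB w (u v : V) : inr w -> word_act w (u - v) = word_act w u - word_act w v.
Proof. by move=> H; rewrite wD // wN. Qed.
Lemma sB i (u v : V) : (1 <= i <= n)%N -> s i (u - v) = s i u - s i v.
Proof. by move=> H; rewrite sD // sN. Qed.
Lemma wZ w c (v : V) : inr w -> word_act w (c *: v) = c *: word_act w v.
Proof. by elim: w => //= i w IH /andP[Hi Hw]; rewrite IH // sZ. Qed.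

Lemma inr_iota a m : (1 <= a)%N -> (a + m <= n.+1)%N -> inr (iota a m).
Proof.
move=> a1 am; apply/allP => x; rewrite mem_iota => /andP[H1 H2]; lia.
Qed.

Lemma w_iota m a k : (1 <= a)%N -> (a + m <= n)%N -> (1 <= k <= n)%N ->
  word_act (iota a m) (eps k) =
  eps (if k == a + m then a else if (a <= k < a + m)%N then k.+1 else k).
Proof.
elim: m a => [|m IH] a Ha Ham Hk /=.
  by congr eps; ifs.
rewrite IH; try lia.
rewrite s_eps_lt; try lia; last by ifs.
by congr eps; ifs.
Qed.

Lemma w_rev_iota m a k : (1 <= a)%N -> (a + m <= n)%N -> (1 <= k <= n)%N ->
  word_act (rev (iota a m)) (eps k) =
  eps (if k == a then a + m else if (a < k <= a + m)%N then k.-1 else k).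
Proof.
elim: m a k => [|m IH] a k Ha Ham Hk /=.
  by congr eps; ifs.
rewrite rev_cons -cats1 /word_act foldr_cat /= -/(word_act _ _).
rewrite s_eps_lt; try lia.
rewrite IH; try lia; last by ifs.
by congr eps; ifs.
Qed.

Lemma cox_eps k : (1 <= n)%N -> (1 <= k <= n)%N ->
  cox (eps k) = if k == n then - eps 1 else eps k.+1.
Proof.
move=> n1 Hk; rewrite /cox.
have -> : iota 1 n = iota 1 n.-1 ++ [:: n].
  have E : n = (n.-1 + 1)%N by lia.
  by rewrite {1}E iotaD add1n prednK.
rewrite /word_act foldr_cat /= -/(word_act _ _) s_eps_n //.
case: (eqVneq k n) => [E|kn]; rewrite ?E.
  rewrite wN ?inr_iota ?w_iota; try lia.
  by congr (- eps _); ifs.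
rewrite w_iota; try lia.
by congr eps; ifs.
Qed.

Lemma tau_lo_eq i : (1 <= i <= n)%N ->
  tau_lo n i = if (i < n)%N then eps 1 - eps i.+1 else 2%:R *: eps 1.
Proof.
move=> Hi; rewrite /tau_lo /alpha; case: ifP => H.
  rewrite wB ?inr_iota ?w_iota; try lia.
  by congr (eps _ - eps _); ifs.
rewrite wZ ?inr_iota ?w_iota; try lia.
by congr (_ *: eps _); ifs.
Qed.

Lemma tau_hi_eq i : (1 <= i <= n)%N -> tau_hi n i = eps i + eps n.
Proof.
move=> Hi; rewrite /tau_hi.
case: (eqVneq i n) => [->|ni].
  by rewrite subnn /= /alpha ltnn scaler_nat mulr2n.
have -> : iota i.+1 (n - i) = iota i.+1 (n - i).-1 ++ [:: n].
  have E : (n - i = (n - i).-1 + 1)%N by lia.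
  by rewrite {1}E iotaD; congr (_ ++ [:: _]); lia.
rewrite rev_cat /= /alpha (_ : (i < n)%N = true); last lia.
rewrite wB; last by rewrite /inr all_rev; apply: inr_iota; lia.
rewrite !w_rev_iota; try lia.
rewrite (_ : (if i == i.+1 then _ else _) = i); last by ifs.
rewrite (_ : (if i.+1 == i.+1 then _ else _) = n); last by ifs.
rewrite sB ?s_eps_n; try lia.
by rewrite eqxx (negbTE ni) opprK.
Qed.

Lemma coxD (u v : V) : cox (u + v) = cox u + cox v.
Proof. by rewrite /cox wD // inr_iota. Qed.
Lemma coxN (v : V) : cox (- v) = - cox v.
Proof. by rewrite /cox wN // inr_iota. Qed.
Lemma coxB (u v : V) : cox (u - v) = cox u - cox v.
Proof. by rewrite coxD coxN. Qed.

Definition hw (k : nat) : int := (n.+1 - k)%:Z.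
Definition h (v : V) := lin hw v.

Lemma h_eps a : (1 <= a <= n)%N -> h (eps a) = (n.+1 - a)%:Z.
Proof. by move=> H; rewrite /h lin_eps. Qed.

Lemma h_alpha i : (1 <= i <= n)%N -> 0 < h (alpha i).
Proof.
move=> Hi; rewrite /h /alpha; case: ifP => H.
  rewrite linB !lin_eps /hw; lia.
rewrite linZ lin_eps /hw; try lia.
Qed.

Lemma neq_negalpha (v : V) i : (1 <= i <= n)%N -> 0 < h v -> v != - alpha i.
Proof.
move=> Hi Hv; apply/eqP => E; move: Hv; rewrite E /h linN -/(h _).
have := h_alpha Hi; lia.
Qed.

Lemma coord_alpha_pos x m : (1 <= x <= n)%N -> (1 <= m <= n)%N ->
  (0 < coord m (alpha x)) = (x == m).
Proof.
move=> Hx Hm; rewrite /alpha; case: ifP => H.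
  rewrite /coord linB !lin_eps; lia.
rewrite /coord linZ lin_eps; lia.
Qed.

Lemma alpha_inj i m : (1 <= i <= n)%N -> (1 <= m <= n)%N -> alpha i = alpha m -> i = m.
Proof.
move=> Hi Hm E; apply/eqP; rewrite -(coord_alpha_pos Hi Hm) E coord_alpha_pos //.
Qed.

Lemma filt0 (P : pred nat) : (forall i, (1 <= i <= n)%N -> ~~ P i) ->
  [seq i <- iota 1 n | P i] = [::].
Proof.
move=> HP; rewrite (@eq_in_filter _ _ pred0) ?filter_pred0 // => i.
rewrite mem_iota => Hi; apply/negbTE/HP; lia.
Qed.

Lemma filt1 (P : pred nat) m : (1 <= m <= n)%N ->
  (forall i, (1 <= i <= n)%N -> P i = (i == m)) ->
  [seq i <- iota 1 n | P i] = [:: m].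
Proof.
move=> Hm HP; rewrite (@eq_in_filter _ _ (pred1 m)) ?filter_pred1_uniq ?iota_uniq //.
  rewrite mem_iota; lia.
move=> i; rewrite mem_iota => Hi; apply: HP; lia.
Qed.

Lemma tau_neg m : (1 <= m <= n)%N -> tau (- alpha m) = tau_lo n m.
Proof.
move=> Hm; rewrite /tau (filt1 (m := m)) // => i Hi.
rewrite eqr_opp; apply/eqP/eqP => [E|->] //; exact: (esym (alpha_inj Hm Hi E)).
Qed.

Lemma tau_at_hi q : (1 <= q <= n)%N -> tau (eps q + eps n) = - alpha q.
Proof.
move=> Hq; have n1 : (1 <= n)%N by lia.
have hpos : 0 < h (eps q + eps n) by rewrite /h linD -!/(h _) !h_eps; lia.
rewrite /tau filt0; last by move=> i Hi; apply: neq_negalpha.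
rewrite (filt1 (m := q)) // => i Hi; rewrite tau_hi_eq //.
apply/eqP/eqP => [E|->] //.
move: (congr1 h E); rewrite /h !linD -!/(h _) !h_eps; lia.
Qed.

Lemma tau_cox (v : V) : (forall i, (1 <= i <= n)%N -> v != - alpha i) ->
  (forall i, (1 <= i <= n)%N -> v != tau_hi n i) -> tau v = cox v.
Proof.
by move=> H1 H2; rewrite /tau !filt0.
Qed.

Definition sig (x : nat) : nat := if x == n.+1 then 1%N else x.+1.

Lemma tau_entry p q : (1 <= n)%N -> (1 <= p <= n.+1)%N -> (1 <= q <= n.+1)%N -> p != q ->
  tau (entry n p q) = entry n (sig p) (sig q).
Proof.
move=> n1 Hp Hq pq.
have sN : sig n.+1 = 1%N by rewrite /sig eqxx.
have sL : forall x, (x <= n)%N -> sig x = x.+1.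
  by move=> x Hx; rewrite /sig (_ : (x == n.+1) = false) //; lia.
case: (eqVneq p 1%N) => [E|p1].
  subst p; rewrite sL //.
  case: (eqVneq q n.+1) => [E|qN].
    subst q; rewrite sN /entry.
    rewrite /=. 
    rewrite tau_neg; last lia.
    rewrite tau_lo_eq; last lia.
    by rewrite ltnn scaler_nat mulr2n.
  rewrite sL; last lia.
  rewrite /entry /= (_ : (1.+1 < q.+1)%N = true); last lia.
  rewrite tau_neg; last lia.
  rewrite tau_lo_eq; last lia.
  by rewrite (_ : (q.-1 < n)%N = true) ?prednK //; lia.
case: (eqVneq p n.+1) => [E|pN].
  subst p; rewrite sN sL; last lia.
  rewrite /entry /= (_ : (n.+1 < q)%N = false); last lia.
  rewrite (_ : (n.+1 == 1%N) = false) //; last lia.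
  by rewrite tau_at_hi //; lia.
rewrite (sL p); last lia.
rewrite /entry (_ : (p == 1%N) = false) //; last lia.
rewrite [in X in _ = X]ifF; last lia.
case: (boolP (p < q)%N) => pq'.
  have hpos : 0 < h (eps p.-1 - eps q.-1) by rewrite /h linB -!/(h _) !h_eps; lia.
  rewrite tau_cox; first last.
  - move=> i Hi; rewrite tau_hi_eq //; apply/eqP => E.
    move: (congr1 (lin (fun _ => 1)) E); rewrite linB linD !lin_eps //; lia.
  - by move=> i Hi; apply: neq_negalpha.
  rewrite coxB !cox_eps; try lia.
  case: (eqVneq q n.+1) => [E|qN].
    subst q; rewrite sN /= (_ : (p.-1 == n) = false); last lia.
    rewrite eqxx opprK prednK; [by rewrite addrC | lia].
  rewrite sL; last lia.
  rewrite /= (_ : (p.-1 == n) = false); last lia.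
  rewrite (_ : (q.-1 == n) = false); last lia.
  rewrite (_ : (p.+1 < q.+1)%N = true); last lia.
  rewrite !(prednK (_ : (0 < p)%N)) ?(prednK (_ : (0 < q)%N)) //; lia.
have hpos : 0 < h (eps q + eps p.-1) by rewrite /h linD -!/(h _) !h_eps; lia.
rewrite tau_cox; first last.
- move=> i Hi; rewrite tau_hi_eq //; apply/eqP => E.
  move: (congr1 (coord n) E); rewrite /coord !linD !lin_eps //; lia.
- by move=> i Hi; apply: neq_negalpha.
rewrite coxD !cox_eps; try lia.
rewrite sL; last lia.
rewrite (_ : (q == n) = false); last lia.
rewrite (_ : (p.-1 == n) = false); last lia.
rewrite (_ : (p.+1 < q.+1)%N = false); last lia.
by rewrite (prednK (_ : (0 < p)%N)); last lia.
Qed.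

Definition C m (v : V) := lin (fun k => (k <= m)%N%:R) v.
Definition trunc m (v : V) : V := \row_(k < n) if (k < m)%N then v 0 k else 0.

Lemma C0 (v : V) : C 0 v = 0.
Proof. by rewrite /C /lin big1 // => k _; rewrite mul0r. Qed.

Lemma CS m (v : V) (H : (m < n)%N) : C m.+1 v = C m v + v 0 (Ordinal H).
Proof.
have E : C m.+1 v - C m v = v 0 (Ordinal H).
  rewrite /C /lin -sumrB (bigD1 (Ordinal H)) //= big1 => [|k Hk].
    by rewrite leqnn ltnn mul1r mul0r subr0 addr0.
  rewrite -mulrBl.
  have Hk' : (val k != m).
    apply/eqP => E; move: Hk; rewrite (_ : k = Ordinal H) ?eqxx //; exact: val_inj.
  rewrite (_ : ((k.+1 <= m.+1)%N%:R - (k.+1 <= m)%N%:R : int) = 0) ?mul0r //.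
  by rewrite ltnS leq_eqVlt (negbTE Hk') subrr.
by rewrite -E addrC subrK.
Qed.

Lemma trunc0 (v : V) : trunc 0 v = 0.
Proof. by apply/rowP => k; rewrite !mxE. Qed.

Lemma truncS m (v : V) (H : (m < n)%N) :
  trunc m.+1 v = trunc m v + v 0 (Ordinal H) *: eps m.+1.
Proof.
apply/rowP => k; rewrite !mxE.
case: (eqVneq (val k) m) => E.
  have -> : k = Ordinal H by apply: val_inj.
  by rewrite /= ltnSn ltnn eqxx add0r mulr1.
rewrite ltnS leq_eqVlt (negbTE E) /= eqSS (negbTE E) mulr0 addr0.
by [].
Qed.

Lemma truncn (v : V) : trunc n v = v.
Proof. by apply/rowP => k; rewrite !mxE ltn_ord. Qed.

Lemma decomp_part m (v : V) : (m <= n)%N ->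
  \sum_(0 <= k < m) C k v *: (eps k - eps k.+1) + C m v *: eps m = trunc m v.
Proof.
elim: m => [|m IH] Hm.
  by rewrite big_geq // add0r C0 scale0r trunc0.
have H : (m < n)%N by lia.
rewrite big_nat_recr //= (truncS _ H) -IH; last lia.
rewrite (CS _ H) scalerBr scalerDl; set S := \sum_(0 <= k < m) _.
rewrite !addrA; congr (_ + _).
by rewrite subrK.
Qed.

Lemma decomp (v : V) :
  v = \sum_(0 <= k < n) C k v *: (eps k - eps k.+1) + C n v *: eps n.
Proof. by rewrite decomp_part // truncn. Qed.

Lemma coef_decomp (v : V) d : (1 <= n)%N -> C n v = 2 * d ->
  v = \sum_(1 <= k < n.+1) (if (k < n)%N then C k v else d) *: alpha k.
Proof.
move=> n1 Hd.
have E : \sum_(0 <= k < n) C k v *: (eps k - eps k.+1) =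
         \sum_(1 <= k < n) (if (k < n)%N then C k v else d) *: alpha k.
  rewrite big_ltn // C0 scale0r add0r.
  by apply: eq_big_nat => k Hk; rewrite /alpha (_ : (k < n)%N = true) //; lia.
rewrite big_nat_recr //= -E ltnn /alpha ltnn scalerA mulrC -Hd.
exact: decomp.
Qed.

Lemma C_eps m a : (1 <= a <= n)%N -> C m (eps a) = (a <= m)%N%:R.
Proof. by move=> H; rewrite /C lin_eps. Qed.

Definition G (q r t : nat) : Prop :=
  ((r < t)%N /\ ((q < r)%N \/ (t < q)%N)) \/ ((t < r)%N /\ (q < t)%N).

Lemma f_row1 (f : V -> V -> int) (hf : is_compat_degree f) q r t :
  (1 <= n)%N -> (2 <= q <= n.+1)%N -> (2 <= r <= n.+1)%N -> (2 <= t <= n.+1)%N ->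
  q != r -> q != t -> r != t ->
  (f (entry n 1 q) (entry n r t) = 0 <-> G q r t).
Proof.
move=> n1 Hq Hr Ht qr qt rt; case: hf => _ _ H3.
have -> : entry n 1 q = - alpha q.-1 by [].
have Hq' : (1 <= q.-1 <= n)%N by lia.
case: (boolP (r < t)%N) => Hrt.
  have -> : entry n r t = eps r.-1 - eps t.-1.
    by rewrite /entry (_ : (r == 1%N) = false) ?Hrt //; lia.
  have pos : pos_root (eps r.-1 - eps t.-1).
    by left; exists r.-1, t.-1; split; [lia|lia|lia|left].
  have Hd : C n (eps r.-1 - eps t.-1) = 2 * 0.
    rewrite /C linB -/(C _ _) -/(C _ _) !C_eps; lia.
  rewrite (H3 _ _ _ Hq' pos (coef_decomp n1 Hd)).
  rewrite /C linB -/(C _ _) -/(C _ _) !C_eps; try lia.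
  rewrite /G !natz; case: ifP => Hc; split; clear -Hq Hr Ht qr qt rt Hrt Hc; try lia.
have -> : entry n r t = eps t + eps r.-1.
  by rewrite /entry (_ : (r == 1%N) = false) ?(negbTE Hrt) //; lia.
have pos : pos_root (eps t + eps r.-1).
  case: (ltnP t r.-1) => H.
    by left; exists t, r.-1; split; [lia|lia|lia|right].
  have -> : r.-1 = t by lia.
  right; exists t; split; [lia|lia|].
  by rewrite scaler_nat mulr2n.
have Hd : C n (eps t + eps r.-1) = 2 * 1.
  rewrite /C linD -/(C _ _) -/(C _ _) !C_eps; lia.
rewrite (H3 _ _ _ Hq' pos (coef_decomp n1 Hd)).
rewrite /C linD -/(C _ _) -/(C _ _) !C_eps; try lia.
rewrite /G !natz; case: ifP => Hc; split; clear -Hq Hr Ht qr qt rt Hrt Hc; lia.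
Qed.

Lemma almost_pos_entry p q : (1 <= p <= n.+1)%N -> (1 <= q <= n.+1)%N -> p != q ->
  almost_pos (entry n p q).
Proof.
move=> Hp Hq pq; rewrite /entry.
case: (eqVneq p 1%N) => [E|p1].
  by right; exists q.-1; split; [lia|lia|].
case: (boolP (p < q)%N) => H.
  by left; left; exists p.-1, q.-1; split; [lia|lia|lia|left].
case: (ltnP q p.-1) => H'.
  by left; left; exists q, p.-1; split; [lia|lia|lia|right].
have -> : p.-1 = q by lia.
left; right; exists q; split; [lia|lia|].
by rewrite scaler_nat mulr2n.
Qed.

Lemma f_sig (f : V -> V -> int) (hf : is_compat_degree f) p q r t :
  (1 <= n)%N ->
  (1 <= p <= n.+1)%N -> (1 <= q <= n.+1)%N -> (1 <= r <= n.+1)%N -> (1 <= t <= n.+1)%N ->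
  p != q -> r != t ->
  f (entry n (sig p) (sig q)) (entry n (sig r) (sig t)) = f (entry n p q) (entry n r t).
Proof.
move=> n1 Hp Hq Hr Ht pq rt; case: hf => H1 _ _.
by rewrite -!tau_entry //; apply: H1; apply: almost_pos_entry.
Qed.

Lemma iter_sig m x : (1 <= x <= n.+1)%N -> (m <= n.+1)%N ->
  ((x + m <= n.+1)%N /\ iter m sig x = (x + m)%N) \/
  ((n.+1 < x + m)%N /\ iter m sig x = (x + m - n.+1)%N).
Proof.
move=> Hx; elim: m => [|m IH] Hm /=.
  by left; rewrite addn0; split; lia.
have [[H1 H2]|[H1 H2]] := IH (ltnW Hm); rewrite H2 /sig.
  case: (eqVneq (x + m)%N n.+1) => E.
    by right; split; lia.
  by left; split; lia.
rewrite (_ : ((x + m - n.+1)%N == n.+1) = false); last lia.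
by right; split; lia.
Qed.

Lemma f_rot (f : V -> V -> int) (hf : is_compat_degree f) m p q r t :
  (1 <= n)%N -> (m <= n.+1)%N ->
  (1 <= p <= n.+1)%N -> (1 <= q <= n.+1)%N -> (1 <= r <= n.+1)%N -> (1 <= t <= n.+1)%N ->
  p != q -> r != t ->
  f (entry n (iter m sig p) (iter m sig q)) (entry n (iter m sig r) (iter m sig t)) =
  f (entry n p q) (entry n r t).
Proof.
move=> n1 + Hp Hq Hr Ht pq rt; elim: m => [|m IH] Hm //=.
have Hm' : (m <= n.+1)%N by lia.
rewrite f_sig //; first by apply: IH.
all: move: (iter_sig Hp Hm') (iter_sig Hq Hm') (iter_sig Hr Hm') (iter_sig Ht Hm').
all: clear -Hp Hq Hr Ht pq rt n1 Hm; lia.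
Qed.
End Aux.

Close Scope ring_scope.

Theorem lemma4p9 (n : nat) (f : 'rV[int]_n -> 'rV[int]_n -> int)
    (hf : is_compat_degree f) (i j k l : nat) :
  (1 <= i <= n.+1)%N -> (1 <= j <= n.+1)%N ->
  (1 <= k <= n.+1)%N -> (1 <= l <= n.+1)%N ->
  uniq [:: i; j; k; l] -> (i < k)%N -> (j < l)%N ->
  (compatible f (entry n i j) (entry n k l) <->
   ~ compatible f (entry n i l) (entry n k j)).
Proof.
move=> Hi Hj Hk Hl Hu ik jl.
move: Hu; rewrite /= !inE !negb_or => /and4P [/and3P[ij ik0 il] /andP[jk jl0] kl0 _].
have n1 : (1 <= n)%N by lia.
pose m := (n.+1 - i).+1.
have Hm : (m <= n.+1)%N by rewrite /m; lia.
rewrite /compatible -(f_rot hf n1 Hm Hi Hj Hk Hl) // -(f_rot hf n1 Hm Hi Hl Hk Hj) //.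
have Ri := iter_sig Hi Hm; have Rj := iter_sig Hj Hm.
have Rk := iter_sig Hk Hm; have Rl := iter_sig Hl Hm.
have -> : iter m (sig n) i = 1 by move: Ri; rewrite /m; lia.
rewrite !f_row1 //; try (move: Rj Rk Rl; rewrite /m; clear -Hi Hj Hk Hl ij ik0 il jk jl0 kl0 ik jl; lia).
move: Rj Rk Rl; rewrite /m /G; clear -Hi Hj Hk Hl ij ik0 il jk jl0 kl0 ik jl.
move=> Rj Rk Rl; split; lia.
by rewrite eq_sym.
Qed.
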